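(* Let $V$ be a finite set with $|V|\ge2$, let $A$ be a real symmetric matrix indexed by $V$, and let $(X,Y)$ be a separation of $A$ such that for each $Z\in\{X,Y\}$ property (P) holds: for all $u\in Z\setminus(X\cap Y)$ and $s\in X\cap Y$, either $A_{su}>\min A$ or there exists a weighted chordless walk from $u$ to $s$ in $A[Z]$ internally vertex-disjoint from $X\cap Y$. Assume that every proper principal submatrix $A[U]$ ($U\subsetneq V$, $|U|\ge2$) satisfies (A) or (B), where for a matrix $B$ indexed by $U$: (A) means $B$ has a critical walk, and (B) means $B$ has two distinct simplicial vertices $u,v$ with $B_{uv}=\min B$. Then each $Z\in\{X,Y\}$ satisfies at least one of: (P1) $A[Z]$ has a simplicial vertex belonging to $Z\setminus(X\cap Y)$; (P2) there is a weighted chordless walk in $A[Z]$ which is rooted in $X\cap Y$.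
   Context: For a symmetric matrix $B$ indexed by $U$, $\min B=\min\{B_{xy}:x\ne y\in U\}$; $A[Z]$ is the principal submatrix indexed by $Z$. A separation of $A$ is a pair $(X,Y)$ of subsets of $V$ with $X\cup Y=V$, $X\setminus Y\ne\emptyset$, $Y\setminus X\neq\emptyset$ and $A_{xy}=\min A$ for all $x\in X\setminus Y$, $y\in Y\setminus X$. $v$ is simplicial in $B$ if $B_{yz}\ge\min\{B_{vy},B_{vz}\}$ for all distinct $y,z\in U\setminus\{v\}$. A walk is $W=(v_0,\dots,v_p)$ ($p\ge1$), from $v_0$ to $v_p$, with internal elements $I(W)=\{v_1,\dots,v_{p-1}\}$; it is closed if $v_0=v_p$; internally vertex-disjoint from $S$ if $I(W)\cap S=\emptyset$. $W$ is weighted chordless in $B$ if $B_{v_{i-1}v_{i+1}}<\min\{B_{v_{i-1}v_i},B_{v_{i+1}v_i}\}$ for $1\le i\le p-1$. A critical walk of $B$ is a closed weighted chordless walk in $B$ whose end point $v_0$ is simplicial in $B$ and for which some $u\in I(W)$ has $B_{v_0u}=\min B$. A walk is rooted in $S$ if its end points belong to $S$, its internal elements belong to the complement of $S$, and $I(W)\ne\emptyset$. *)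

(* Defs.v *)
From mathcomp Require Import all_boot all_order all_algebra.
Set Implicit Arguments. Unset Strict Implicit. Unset Printing Implicit Defensive.
Import Order.TTheory GRing.Theory Num.Theory.
Local Open Scope ring_scope.

Section Defs.
Variables (R : realFieldType) (V : finType) (A : V -> V -> R).

(* min B for B = A[U]: the minimum of A x y over x <> y in U
   (meaningful when #|U| >= 2). *)
Definition offdiag_vals (U : {set V}) : seq R :=
  [seq A p.1 p.2 | p <- enum [set p in setX U U | p.1 != p.2]].
Definition mmin (U : {set V}) : R :=
  let s := offdiag_vals U in foldr Num.min (head 0 s) s.

Definition simplicial (U : {set V}) (v : V) : Prop :=
  v \in U /\
  forall y z, y \in U -> z \in U -> y != v -> z != v -> y != z ->
    Num.min (A v y) (A v z) <= A y z.

Definition walk_in (U : {set V}) (w : seq V) : bool :=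
  (1 < size w)%N && all (fun x => x \in U) w.

Definition ends (w : seq V) (a b : V) : Prop :=
  exists r, w = a :: r /\ last a r = b.

(* internal elements v_1, ..., v_{p-1} *)
Definition internal (w : seq V) : seq V :=
  match w with [::] => [::] | _ :: r => take (size r).-1 r end.

Fixpoint wchordless (w : seq V) : bool :=
  match w with
  | a :: ((b :: c :: _) as t) =>
      (A a c < Num.min (A a b) (A c b)) && wchordless t
  | _ => true
  end.

Definition critical (U : {set V}) (w : seq V) : Prop :=
  walk_in U w /\ wchordless w /\
  exists v0, ends w v0 v0 /\ simplicial U v0 /\
    exists2 u, u \in internal w & A v0 u = mmin U.

Definition rooted_in (U S : {set V}) (w : seq V) : Prop :=
  walk_in U w /\
  (exists a b, ends w a b /\ a \in S /\ b \in S) /\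
  all (fun x => x \in U :\: S) (internal w) /\ internal w != [::].

Definition separation (X Y : {set V}) : Prop :=
  X :|: Y = [set: V] /\ X :\: Y != set0 /\ Y :\: X != set0 /\
  forall x y, x \in X :\: Y -> y \in Y :\: X -> A x y = mmin [set: V].

Definition condA (U : {set V}) : Prop := exists w, critical U w.
Definition condB (U : {set V}) : Prop :=
  exists u v, u != v /\ simplicial U u /\ simplicial U v /\ A u v = mmin U.

Definition propP (X Y Z : {set V}) : Prop :=
  forall u s, u \in Z :\: (X :&: Y) -> s \in X :&: Y ->
    mmin [set: V] < A s u \/
    exists w, walk_in Z w /\ wchordless w /\ ends w u s /\
      all (fun x => x \notin X :&: Y) (internal w).

Definition propP1 (X Y Z : {set V}) : Prop :=
  exists v, v \in Z :\: (X :&: Y) /\ simplicial Z v.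
Definition propP2 (X Y Z : {set V}) : Prop :=
  exists w, wchordless w /\ rooted_in Z (X :&: Y) w.
End Defs.

(* Main.v *)
Require Import Defs.
From mathcomp Require Import all_boot all_order all_algebra.
Set Implicit Arguments. Unset Strict Implicit. Unset Printing Implicit Defensive.
Import Order.TTheory GRing.Theory Num.Theory.
Local Open Scope ring_scope.

Section Proof.
Variables (R : realFieldType) (V : finType) (A : V -> V -> R).
Hypothesis Asym : forall x y, A x y = A y x.

Lemma foldr_min_le (s : seq R) d x : x \in s -> foldr Num.min d s <= x.
Proof.
elim: s => [//|y s IH]; rewrite inE => /orP [/eqP -> | xs] /=.
  by rewrite ge_min lexx.
by rewrite ge_min IH ?orbT.
Qed.

Lemma mmin_le (U : {set V}) x y : x \in U -> y \in U -> x != y -> mmin A U <= A x y.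
Proof.
move=> xU yU xy; rewrite /mmin; apply: foldr_min_le.
apply/mapP; exists (x, y) => //; rewrite mem_enum inE /= xy andbT.
by rewrite in_setX xU yU.
Qed.

Lemma wch_cons x s : wchordless A (x :: s) -> wchordless A s.
Proof. by case: s => [|y [|z r]] //= /andP[]. Qed.

Lemma wch_cat s t : wchordless A (s ++ t) -> wchordless A s.
Proof.
elim: s => [//|x [|y [|z r]] IH] //=.
move=> /andP[h1 h2]; rewrite h1 /=; exact: IH.
Qed.

Lemma internal_rcons (a c : V) mid : internal (a :: rcons mid c) = mid.
Proof. by rewrite /= size_rcons /= -cats1 take_size_cat. Qed.

Definition P1 (U S : {set V}) := exists v, v \in U :\: S /\ simplicial A U v.
Definition P2 (U S : {set V}) := exists w, wchordless A w /\ rooted_in U S w.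

Lemma seg (U S : {set V}) r : forall a mid, a \in S -> a \in U -> mid != [::] ->
  all (fun x => x \in U :\: S) mid -> all (fun x => x \in U) r ->
  wchordless A (a :: mid ++ r) -> last a (mid ++ r) \in S -> P2 U S.
Proof.
elim: r => [|c r IH] a mid aS aU nm amid ar wc ls.
  exfalso; rewrite cats0 in ls; case: mid nm amid ls wc => [//|m0 mr] _ amid ls _.
  have := mem_last m0 mr; move/(allP amid) => /=.
  by rewrite inE /= ls.
move: ar => /= /andP[cU ar].
case: (boolP (c \in S)) => cS.
  exists (a :: rcons mid c); split.
    by apply: (@wch_cat _ r); rewrite /= cat_rcons.
  split.
    rewrite /walk_in /= size_rcons /= aU all_rcons cU /=.
    by apply/allP => x /(allP amid); rewrite inE => /andP[].
  split.
    by exists a, c; split => //; exists (rcons mid c); rewrite last_rcons.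
  by rewrite internal_rcons.
apply: (IH a (rcons mid c)) => //.
- by case: (mid) nm.
- by rewrite all_rcons amid inE cS cU.
- by rewrite cat_rcons.
- by rewrite cat_rcons.
Qed.

Lemma seg2 (U S : {set V}) r : forall a, a \in S -> a \in U ->
  all (fun x => x \in U) r -> wchordless A (a :: r) -> last a r \in S ->
  has (fun x => x \notin S) r -> P2 U S.
Proof.
elim: r => [//|b r IH] a aS aU /= /andP[bU ar] wc ls hr.
case: (boolP (b \in S)) => bS; last first.
  apply: (@seg U S r a [:: b]) => //=; by rewrite ?inE ?bS ?bU.
rewrite bS /= in hr.
exact: (IH b bS bU ar (@wch_cons a (b :: r) wc) ls hr).
Qed.

Definition gr (m : R) : rel V := fun a b => m < A a b.

Lemma shortL m n x q : (size q <= n)%N -> path (gr m) x q -> wchordless A q -> q != [::] ->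
  exists q', [/\ subseq q' q, last x q' = last x q, path (gr m) x q',
                 wchordless A (x :: q') & q' != [::]].
Proof.
elim: n x q => [|n IH] x [|y q0] // szq /andP[gxy pq] wq _.
case: q0 szq pq wq => [|z q1] szq pq wq.
  by exists [:: y]; split; rewrite /= ?eqxx ?gxy.
move: (pq) => /andP[gyz pq1].
have gxy' : m < A x y := gxy.
have gyz' : m < A y z := gyz.
have [xz|xz] := leP (A x z) m.
  exists [:: y, z & q1]; split; [exact: subseq_refl | by [] | by apply/andP; split | | by []].
  apply/andP; split; last exact: wq.
  rewrite lt_min; apply/andP; split.
    exact: le_lt_trans xz gxy'.
  by rewrite [A z y]Asym; exact: le_lt_trans xz gyz'.
have pxz : path (gr m) x (z :: q1) by apply/andP; split.
have [q' [s1 l1 p1 w1 n1]] := IH x (z :: q1) szq pxz (@wch_cons y (z :: q1) wq) isT.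
exists q'; split => //.
apply: (subseq_trans s1); exact: subseq_cons.
Qed.

Lemma shortM m q x : path (gr m) x q -> q != [::] ->
  exists q', [/\ subseq q' q, last x q' = last x q, path (gr m) x q',
                 wchordless A (x :: q') & q' != [::]].
Proof.
elim: q x => [//|y q0 IH] x /andP[gxy pq] _.
case: q0 IH pq => [|z q1] IH pq.
  by exists [:: y]; split; rewrite /= ?eqxx ?gxy.
have [q0' [s1 l1 p1 w1 n1]] := IH y pq isT.
have p' : path (gr m) x (y :: q0') by apply/andP; split.
have [q' [s2 l2 p2 w2 n2]] := @shortL m (size (y :: q0')) x (y :: q0') (leqnn _) p' w1 isT.
exists q'; split => //.
- apply: (subseq_trans s2); by rewrite /= eqxx.
- by rewrite l2; exact: l1.
Qed.

Definition Hered (U : {set V}) := forall W : {set V}, W \subset U ->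
  (2 <= #|W|)%N -> condA A W \/ condB A W.

Lemma claim n : forall U S : {set V}, (#|U| < n)%N -> Hered U ->
  (exists t, t \in U :\: S) -> P1 U S \/ P2 U S.
Proof.
elim: n => [//|n IHn] U S szU HU [t0 t0T].
have t0U : t0 \in U by case/setDP: t0T.
have t0S : t0 \notin S by case/setDP: t0T.
have [le1|gt1] := leqP #|U| 1.
  left; exists t0; split=> //; split=> // y z yU zU yt zt yz; exfalso.
  have : (1 < #|U|)%N by apply/card_gt1P; exists t0, y; split=> //; rewrite eq_sym.
  by rewrite ltnNge le1.
pose m := mmin A U.
have mle : forall x y, x \in U -> y \in U -> x != y -> m <= A x y.
  by move=> x y; exact: mmin_le.
pose e : rel V := fun x y => [&& x \in U :\: S, y \in U :\: S & m < A x y].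
have esym : symmetric e.
  by move=> x y; rewrite /e Asym; case: (x \in U :\: S); case: (y \in U :\: S).
pose C := [set x in U :\: S | connect e t0 x].
pose K := [set s in U | (s \in S) && [exists c in C, m < A s c]].
pose W := C :|: K.
have CT : forall x, x \in C -> x \in U :\: S by move=> x; rewrite in_set => /andP[].
have t0C : t0 \in C by rewrite in_set t0T connect0.
have Cclos : forall x y, x \in C -> y \in U :\: S -> m < A x y -> y \in C.
  move=> x y xC yT lt; rewrite in_set yT /=.
  move: xC; rewrite in_set => /andP[xT cx].
  apply: (connect_trans cx); apply: connect1; by rewrite /e xT yT lt.
have KU : forall x, x \in K -> x \in U by move=> x; rewrite in_set => /andP[].
have KS : forall x, x \in K -> x \in S by move=> x; rewrite in_set => /and3P[].
have WU : W \subset U.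
  apply/subsetP => x; rewrite in_setU => /orP[/CT|/KU] //; by case/setDP.
have pathT : forall x p, path e x p -> {subset p <= U :\: S}.
  move=> x p; elim: p x => [//|y p IH] x /andP[exy py] z.
  rewrite inE => /orP[/eqP ->|zp]; first by case/and3P: exy.
  exact: IH py z zp.
have clique : forall s1 s2, s1 \in K -> s2 \in K -> A s1 s2 <= m -> P2 U S.
  move=> s1 s2 s1K s2K le12.
  have s1U := KU _ s1K; have s2U := KU _ s2K.
  have s1S := KS _ s1K; have s2S := KS _ s2K.
  move: s1K; rewrite in_set => /and3P[_ _ /exists_inP[c1 c1C g1]].
  move: s2K; rewrite in_set => /and3P[_ _ /exists_inP[c2 c2C g2]].
  have cc : connect e c1 c2.
    move: (c1C) (c2C); rewrite !in_set => /andP[_ h1] /andP[_ h2].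
    apply: connect_trans h2; by rewrite (sym_connect_sym esym).
  case/connectP: cc => p pp lp.
  have pq : path (gr m) s1 (c1 :: rcons p s2).
    have h : path (gr m) c1 (rcons p s2).
      rewrite rcons_path -lp; apply/andP; split.
        apply: sub_path pp => a b /and3P[_ _ h]; exact: h.
      by rewrite /gr /= Asym.
    by apply/andP; split.
  have [q' [sq lq pq' wq nq]] := shortM pq isT.
  case: q' sq lq pq' wq nq => [//|b r] sq lq pq' wq _.
  have qU : forall x, x \in c1 :: rcons p s2 -> x \in U.
    move=> x; rewrite inE mem_rcons inE => /or3P[/eqP->|/eqP->|xp] //.
    - by case/setDP: (CT _ c1C).
    - by case/setDP: (pathT _ _ pp x xp).
  have bT : b \in U :\: S.
    have : b \in c1 :: rcons p s2 by apply: (mem_subseq sq); rewrite inE eqxx.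
    rewrite inE mem_rcons inE => /or3P[/eqP->|/eqP eb|bp].
    - exact: CT.
    - exfalso; move: pq' => /andP[h _]; move: h; rewrite /gr /= eb => h.
      by move: (lt_le_trans h le12); rewrite ltxx.
    - exact: pathT pp b bp.
  have amid : all (fun x => x \in U :\: S) [:: b] by rewrite /= bT.
  have ar : all (fun x => x \in U) r.
    apply/allP => x xr; apply: qU; apply: (mem_subseq sq); by rewrite inE xr orbT.
  have ls : last s1 ([:: b] ++ r) \in S.
    by move: lq => /= ->; rewrite last_rcons.
  exact: (@seg U S r s1 [:: b] s1S s1U isT amid ar wq ls).
have far : forall v x, v \in C -> x \in U -> x \notin W -> A v x <= m.
  move=> v x vC xU xW; rewrite leNgt; apply/negP => lt.
  move: xW; rewrite in_setU negb_or => /andP[xC xK].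
  case: (boolP (x \in S)) => xS.
  - move/negP: xK; apply; rewrite in_set xU xS /=; apply/exists_inP; exists v => //.
    by rewrite Asym.
  - move/negP: xC; apply; apply: (Cclos v) => //; by rewrite in_setD xS xU.
have lift : forall v, v \in C -> simplicial A W v -> simplicial A U v.
  move=> v vC [vW sv]; split; first by case/setDP: (CT _ vC).
  move=> y z yU zU yv zv yz.
  case: (boolP (y \in W)) => yW; case: (boolP (z \in W)) => zW.
  - exact: sv.
  - rewrite ge_min; apply/orP; right; exact: le_trans (far _ _ vC zU zW) (mle _ _ yU zU yz).
  - rewrite ge_min; apply/orP; left; exact: le_trans (far _ _ vC yU yW) (mle _ _ yU zU yz).
  - rewrite ge_min; apply/orP; left; exact: le_trans (far _ _ vC yU yW) (mle _ _ yU zU yz).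
case: (boolP (W \proper U)) => pW.
  have szW : (#|W| < n)%N by have h := proper_card pW; exact: leq_trans h szU.
  have HW : Hered W by move=> W' sW' c; apply: HU => //; apply: subset_trans sW' WU.
  have t0W : exists t, t \in W :\: S by exists t0; rewrite in_setD t0S in_setU t0C.
  case: (IHn W S szW HW t0W) => [[v [vWS sv]]|[w [wc rw]]].
    have vC : v \in C.
      move: vWS; rewrite in_setD in_setU => /andP[vS /orP[//|/KS vS']].
      by rewrite vS' in vS.
    left; exists v; split; [exact: CT | exact: lift].
  right; exists w; split => //.
  move: rw => [wW [eab [ia ine]]]; split; last split; [|exact: eab|split; [|exact: ine]].
    move: wW => /andP[h1 h2]; apply/andP; split => //.
    by apply/allP => x /(allP h2); exact: (subsetP WU).
  apply/allP => x /(allP ia); rewrite !in_setD => /andP[-> xW] /=.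
  exact: (subsetP WU).
have UW : U \subset W by rewrite properE WU /= negbK in pW.
have inK : forall x, x \in U -> x \in S -> x \in K.
  move=> x xU xS; have : x \in W := subsetP UW x xU.
  rewrite in_setU => /orP[xC|//]; by move: (CT _ xC); rewrite in_setD xS.
case: (HU U (subxx _) gt1) =>
  [[w [wW [wch [v0 [[r [ew lr]] [sv0 [u uin Au]]]]]]]|[u [v [uv [su [sv Auv]]]]]].
  case: (boolP (v0 \in S)) => v0S; last first.
    by left; exists v0; split => //; rewrite in_setD v0S /=; case: sv0.
  subst w.
  move: wW => /andP[_ /andP[v0U ra]].
  case: (boolP (has (fun x => x \notin S) r)) => hr.
    right; apply: (seg2 v0S v0U ra wch _ hr); by rewrite lr.
  have ur : u \in r by exact: mem_take uin.
  have uS : u \in S by move/hasPn: hr => /(_ u ur); rewrite negbK.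
  have uU : u \in U by apply: (allP ra).
  right; apply: (clique v0 u (inK _ v0U v0S) (inK _ uU uS)).
  rewrite Au; exact: lexx.
case: (boolP (u \in S)) => uS; last first.
  by left; exists u; split => //; rewrite in_setD uS /=; case: su.
case: (boolP (v \in S)) => vS; last first.
  by left; exists v; split => //; rewrite in_setD vS /=; case: sv.
right; apply: (clique u v (inK _ (proj1 su) uS) (inK _ (proj1 sv) vS)).
rewrite Auv; exact: lexx.
Qed.

End Proof.

Theorem lemma9 (R : realFieldType) (V : finType) (A : V -> V -> R)
  (X Y : {set V}) :
  (1 < #|V|)%N ->
  (forall x y, A x y = A y x) ->
  separation A X Y ->
  (forall Z, Z = X \/ Z = Y -> propP A X Y Z) ->
  (forall U : {set V}, U \proper [set: V] -> (2 <= #|U|)%N ->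
     condA A U \/ condB A U) ->
  forall Z, Z = X \/ Z = Y -> propP1 A X Y Z \/ propP2 A X Y Z.
Proof.
move=> _ Asym [_ [XnY [YnX _]]] _ Hsub Z HZ.
have key : forall Z', (exists t, t \in Z' :\: (X :&: Y)) -> (exists y, y \notin Z') ->
    propP1 A X Y Z' \/ propP2 A X Y Z'.
  move=> Z' t0 [y yZ].
  apply: (@claim R V A Asym (#|Z'|.+1) Z' (X :&: Y) (ltnSn _)) => //.
  move=> W sW cW; apply: Hsub => //; apply/properP; split; first exact: subsetT.
  exists y; first by rewrite inE.
  by apply: contra yZ; exact: (subsetP sW).
case: HZ => ->; apply: key.
- case/set0Pn: XnY => x; rewrite !inE => /andP[xY xX]; exists x.
  by rewrite !inE xX (negbTE xY).
- case/set0Pn: YnX => y; rewrite !inE => /andP[yX yY]; exists y => //.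
- case/set0Pn: YnX => y; rewrite !inE => /andP[yX yY]; exists y.
  by rewrite !inE yY (negbTE yX).
- case/set0Pn: XnY => x; rewrite !inE => /andP[xY xX]; exists x => //.
Qed.
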